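(* $\mathfrak{L}(\mathbb{Z}^2) \subsetneq \mathfrak{L}(\mathbf{H})$.
   Context: For a group $G$ with identity $e$, a $G$-automaton is a tuple $(Q,\Sigma,G,\delta,q_0,Q_a)$ where $Q$ is a finite set of states, $\Sigma$ a finite input alphabet, $q_0\in Q$ the initial state, $Q_a\subseteq Q$ the accepting states, and $\delta$ assigns to each $(q,\sigma)\in Q\times(\Sigma\cup\{\varepsilon\})$ a finite set of pairs $(q',m)\in Q\times G$. The register holds an element of $G$, initially $e$; using a transition $(q',m)\in\delta(q,\sigma)$ the automaton reads $\sigma$ (or nothing), moves to $q'$ and replaces the register content $x$ by $xm$. A word is accepted if some computation reads it entirely and ends in an accepting state with register equal to $e$. $\mathfrak{L}(G)$ is the class of languages recognized by $G$-automata. $\mathbb{Z}^2$ is the free Abelian group of rank 2. $\mathbf{H}$ is the discrete Heisenberg group $\langle a,b\mid ab=bac,\ ac=ca,\ bc=cb\rangle$ with $c=a^{-1}b^{-1}ab$, equivalently the group of $3\times3$ upper unitriangular integer matrices. *)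

(* Defs.v *)
From mathcomp Require Import all_boot all_order all_algebra.
Set Implicit Arguments. Unset Strict Implicit. Unset Printing Implicit Defensive.
Import GRing.Theory Num.Theory.
Local Open Scope ring_scope.

(* The transition function assigns to each
   state q and each letter (Some a) or the empty word (None) a finite set (here: a finite
   list) of pairs (q', m) in Q x G. *)
Record gautomaton (G : eqType) (S : finType) := GAutomaton {
  gstate : finType;
  gdelta : gstate -> option S -> seq (gstate * G);
  ginit  : gstate;
  gacc   : {set gstate}
}.

Section Computations.
Variables (G : eqType) (mul : G -> G -> G) (S : finType) (A : gautomaton G S).

Inductive gcomp : gstate A -> G -> seq S -> gstate A -> G -> Prop :=
| gcomp_nil q x : gcomp q x [::] q x
| gcomp_eps q x q1 m w q2 y :
    (q1, m) \in gdelta q None -> gcomp q1 (mul x m) w q2 y -> gcomp q x w q2 y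
| gcomp_sym q x a q1 m w q2 y :
    (q1, m) \in gdelta q (Some a) -> gcomp q1 (mul x m) w q2 y -> gcomp q x (a :: w) q2 y.

End Computations.

Definition gaccepts (G : eqType) (mul : G -> G -> G) (e : G) (S : finType)
    (A : gautomaton G S) (w : seq S) : Prop :=
  exists2 q, q \in gacc A & gcomp mul (ginit A) e w q e.

Definition in_LG (G : eqType) (mul : G -> G -> G) (e : G) (S : finType)
    (L : seq S -> Prop) : Prop :=
  exists A : gautomaton G S, forall w, L w <-> gaccepts mul e A w.

Definition Z2 : eqType := (int * int)%type.
Definition Z2mul (x y : Z2) : Z2 := (x.1 + y.1, x.2 + y.2).
Definition Z2one : Z2 := (0, 0).

(* Heisenberg group: upper unitriangular 3x3 integer matrices
     [[1, a, c], [0, 1, b], [0, 0, 1]]  encoded as ((a, b), c).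
   Matrix product: ((a,b),c) * ((a',b'),c') = ((a+a', b+b'), c + c' + a*b'). *)
Definition Heis : eqType := ((int * int) * int)%type.
Definition Hmul (x y : Heis) : Heis :=
  ((x.1.1 + y.1.1, x.1.2 + y.1.2), x.2 + y.2 + x.1.1 * y.1.2).
Definition Hone : Heis := ((0, 0), 0).

(* Main.v *)
Require Import Defs.
From mathcomp Require Import all_boot all_order all_algebra zify ring.
Set Implicit Arguments. Unset Strict Implicit. Unset Printing Implicit Defensive.
Import GRing.Theory Num.Theory.
Lemma sort3 (T : Type) (g : nat -> T) N x y z :
  x <> y -> y <> z -> z <> x -> x < N -> y < N -> z < N ->
  g x = g y -> g y = g z ->
  exists i j k, [/\ i < j, j < k, k < N & g i = g j /\ g j = g k].
Proof.
move=> nxy nyz nzx xN yN zN e1 e2.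
case: (ltngtP x y) => [xy|yx|]; last by congruence.
- case: (ltngtP y z) => [yz|zy|]; last by congruence.
  + by exists x, y, z.
  + case: (ltngtP x z) => [xz|zx|]; last by congruence.
    * by exists x, z, y; split => //; split; congruence.
    * by exists z, x, y; split => //; split; congruence.
- case: (ltngtP x z) => [xz|zx|]; last by congruence.
  + by exists y, x, z; split => //; split; congruence.
  + case: (ltngtP y z) => [yz|zy|]; last by congruence.
    * by exists y, z, x; split => //; split; congruence.
    * by exists z, y, x; split => //; split; congruence.
Qed.

Lemma pig3 (T : finType) (g : nat -> T) N : 2 * #|T| < N ->
  exists i j k, [/\ i < j, j < k, k < N & g i = g j /\ g j = g k].
Proof.
move=> HN.
pose h := fun t : 'I_N => g t.
have [x Hx] : exists x, 2 < #|[pred t | h t == x]|.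
  case: (boolP [exists x, 2 < #|[pred t | h t == x]|]) => [/existsP//|/existsPn Hno].
  have : N <= 2 * #|T|.
    rewrite -[X in X <= _]card_ord -sum1_card.
    rewrite (partition_big h predT) //=.
    rewrite mulnC -sum_nat_const; apply: leq_sum => j _.
    rewrite sum1_card; move: (Hno j); rewrite ltnNge negbK.
    by apply: leq_trans; apply: subset_leq_card; apply/subsetP => t; rewrite !inE.
  by rewrite leqNgt HN.
case/card_gt2P: Hx => a [b [c [[ha hb hc] [nab nbc nca]]]].
rewrite !inE in ha hb hc.
apply: (@sort3 _ g N a b c).
- by move=> /val_inj E; rewrite E eqxx in nab.
- by move=> /val_inj E; rewrite E eqxx in nbc.
- by move=> /val_inj E; rewrite E eqxx in nca.
- exact: ltn_ord.
- exact: ltn_ord.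
- exact: ltn_ord.
- by rewrite -/(h a) -/(h b) (eqP ha) (eqP hb).
- by rewrite -/(h c) -/(h b) (eqP hc) (eqP hb).
Qed.
Section Gen.
Variables (G : eqType) (mul : G -> G -> G) (S : finType) (A : gautomaton G S).
Local Notation gc := (@gcomp G mul S A).

Lemma gcomp_cat q x w1 q1 x1 w2 q2 x2 :
  gc q x w1 q1 x1 -> gc q1 x1 w2 q2 x2 ->
  gc q x (w1 ++ w2) q2 x2.
Proof.
elim=> //= [q' x' q'' m w q3 y Hm _ IH | q' x' a q'' m w q3 y Hm _ IH] H2.
- exact: (gcomp_eps Hm (IH H2)).
- exact: (gcomp_sym Hm (IH H2)).
Qed.

Lemma gcomp_split q x w q2 y : gc q x w q2 y ->
  forall w1 w2, w = w1 ++ w2 ->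
  exists q1 x1, gc q x w1 q1 x1 /\ gc q1 x1 w2 q2 y.
Proof.
elim=> [q' x'|q' x' q'' m w' q3 y' Hm _ IH|q' x' a q'' m w' q3 y' Hm Hc IH] w1 w2.
- case: w1 => [|b w1] //= <-; exists q', x'; split; exact: gcomp_nil.
- move=> E; case: (IH _ _ E) => q1 [x1 [H1 H2]].
  exists q1, x1; split => //; exact: (gcomp_eps Hm H1).
- case: w1 => [|b w1] /=.
  + move=> <-; exists q', x'; split; first exact: gcomp_nil.
    exact: (gcomp_sym Hm Hc).
  + case=> <- E; case: (IH _ _ E) => q1 [x1 [H1 H2]].
    exists q1, x1; split => //; exact: (gcomp_sym Hm H1).
Qed.

Lemma gcomp_trace (B : nat -> seq S) r : forall m q x rest q' y,
  gc q x (flatten (map B (iota m r)) ++ rest) q' y ->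
  exists f : nat -> (gstate A * G),
    [/\ f m = (q, x),
        (forall t, m <= t < m + r -> gc (f t).1 (f t).2 (B t) (f t.+1).1 (f t.+1).2)
      & gc (f (m + r)).1 (f (m + r)).2 rest q' y].
Proof.
elim: r => [|r IH] m q x rest q' y /=.
- move=> H; exists (fun _ => (q, x)); split => //.
  + by move=> t; rewrite addn0 => /andP [h1 h2]; move: (leq_ltn_trans h1 h2); rewrite ltnn.
- rewrite -catA => H.
  case: (gcomp_split H (erefl _)) => q1 [x1 [H1 H2]].
  case: (IH _ _ _ _ _ _ H2) => f [f0 fs fe].
  exists (fun t => if t <= m then (q, x) else f t); split.
  + by rewrite leqnn.
  + move=> t /andP [Hmt Htr].
    case: (ltngtP t m) => Htm; first lia.
    * apply: fs; lia.
    * by rewrite Htm f0.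
  + have -> : (m + r.+1 <= m) = false by lia.
    by rewrite addnS -addSn.
Qed.

Lemma gcomp_compose (B : nat -> seq S) (f : nat -> (gstate A * G)) m r :
  (forall t, m <= t < m + r -> gc (f t).1 (f t).2 (B t) (f t.+1).1 (f t.+1).2) ->
  forall d i, m <= i -> i + d <= m + r ->
  gc (f i).1 (f i).2 (flatten (map B (iota i d))) (f (i + d)).1 (f (i + d)).2.
Proof.
move=> fs; elim=> [|d IH] i Hi Hd /=.
- rewrite addn0; exact: gcomp_nil.
- apply: gcomp_cat; first by apply: fs; lia.
  rewrite addnS -addSn; apply: IH; lia.
Qed.

Lemma gcomp_transl (assoc : forall a b c, mul (mul a b) c = mul a (mul b c)) q x w q' y :
  gc q x w q' y -> forall d, gc q (mul d x) w q' (mul d y).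
Proof.
elim=> [q0 x0|q0 x0 q1 m w0 q2 y0 Hm _ IH|q0 x0 a q1 m w0 q2 y0 Hm _ IH] d.
- exact: gcomp_nil.
- apply: (gcomp_eps Hm); rewrite assoc; exact: IH.
- apply: (gcomp_sym Hm); rewrite assoc; exact: IH.
Qed.

End Gen.
Local Open Scope ring_scope.

Definition phi (x : Z2) : Heis := ((0, x.1), x.2).

Lemma phiM x m : phi (Z2mul x m) = Hmul (phi x) (phi m).
Proof. by rewrite /phi /Z2mul /Hmul /= addr0 mul0r addr0. Qed.

Lemma phi_inj x y : phi x = phi y -> x = y.
Proof. by case: x y => [a b] [c d] [-> ->]. Qed.

Section Emb.
Variables (S : finType) (A : gautomaton Z2 S).

Definition embA : gautomaton Heis S :=
  {| gstate := gstate A;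
     gdelta := fun q s => map (fun p => (p.1, phi p.2)) (gdelta (g:=A) q s);
     ginit := ginit A;
     gacc := gacc A |}.

Lemma emb_fwd q x w q' y : @gcomp _ Z2mul _ A q x w q' y ->
  @gcomp _ Hmul _ embA q (phi x) w q' (phi y).
Proof.
elim=> [q0 x0|q0 x0 q1 m w0 q2 y0 Hm _ IH|q0 x0 a q1 m w0 q2 y0 Hm _ IH].
- exact: gcomp_nil.
- apply: (@gcomp_eps _ _ _ embA q0 _ q1 (phi m)).
  + by apply/mapP; exists (q1, m).
  + by rewrite -phiM.
- apply: (@gcomp_sym _ _ _ embA q0 _ a q1 (phi m)).
  + by apply/mapP; exists (q1, m).
  + by rewrite -phiM.
Qed.

Lemma emb_bwd q X w q' Y : @gcomp _ Hmul _ embA q X w q' Y ->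
  forall x, X = phi x -> exists2 y, Y = phi y & @gcomp _ Z2mul _ A q x w q' y.
Proof.
elim=> [q0 x0|q0 x0 q1 m w0 q2 y0 Hm _ IH|q0 x0 a q1 m w0 q2 y0 Hm _ IH] x Ex.
- by exists x => //; exact: gcomp_nil.
- case/mapP: Hm => [[q1' m'] Hin [Eq Em]]; subst q1 m.
  case: (IH (Z2mul x m')); first by rewrite Ex phiM.
  move=> y Ey Hc; exists y => //; exact: (gcomp_eps Hin Hc).
- case/mapP: Hm => [[q1' m'] Hin [Eq Em]]; subst q1 m.
  case: (IH (Z2mul x m')); first by rewrite Ex phiM.
  move=> y Ey Hc; exists y => //; exact: (gcomp_sym Hin Hc).
Qed.

End Emb.

Lemma part1 (S : finType) (L : seq S -> Prop) :
  in_LG Z2mul Z2one L -> in_LG Hmul Hone L.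
Proof.
case=> A HA; exists (embA A) => w; rewrite HA; split.
- case=> q Hq Hc; exists q => //; exact: (emb_fwd Hc).
- case=> q Hq Hc; exists q => //.
  case: (emb_bwd Hc (x := Z2one) (erefl _)) => y Ey Hc'.
  have E : y = Z2one by apply: phi_inj; rewrite -Ey.
  by rewrite E in Hc'.
Qed.

Notation letter := (option bool).
Definition na (w : seq letter) : nat := count_mem (Some true) w.
Definition nb (w : seq letter) : nat := count_mem (Some false) w.
Fixpoint inv (w : seq letter) : nat :=
  match w with
  | [::] => 0%N
  | Some true :: w' => (nb w' + inv w')%N
  | _ :: w' => inv w'
  end.
Definition Lsep (w : seq letter) : Prop :=
  exists2 u, all (fun l => l != None) u & w = u ++ nseq (inv u) None.

Definition s0 : 'I_4 := @Ordinal 4 0 isT.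
Definition s1 : 'I_4 := @Ordinal 4 1 isT.
Definition s2 : 'I_4 := @Ordinal 4 2 isT.
Definition s3 : 'I_4 := @Ordinal 4 3 isT.
Definition gA : Heis := ((1, 0), 0).
Definition gB : Heis := ((0, 1), 0).
Definition gAi : Heis := ((-1, 0), 0).
Definition gBi : Heis := ((0, -1), 0).
Definition gCi : Heis := ((0, 0), -1).

Definition Hdelta (q : 'I_4) (l : option letter) : seq ('I_4 * Heis) :=
  match nat_of_ord q, l with
  | 0%N, Some (Some true) => [:: (s0, gA)]
  | 0%N, Some (Some false) => [:: (s0, gB)]
  | 0%N, None => [:: (s1, Hone)]
  | 1%N, None => [:: (s1, gAi); (s2, Hone)]
  | 2%N, None => [:: (s2, gBi); (s3, Hone)]
  | 3%N, Some None => [:: (s3, gCi)]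
  | _, _ => [::]
  end.

Definition HAut : gautomaton Heis (option bool : finType) :=
  {| gstate := ('I_4 : finType); gdelta := Hdelta; ginit := s0; gacc := [set s3] |}.

Local Notation gcH := (@gcomp Heis Hmul _ HAut).

Definition hv (u : seq letter) : Heis := (((na u)%:Z, (nb u)%:Z), (inv u)%:Z).

Lemma P3 q R w q' R' : gcH q R w q' R' -> nat_of_ord q = 3%N ->
  exists k : nat, [/\ w = nseq k None, nat_of_ord q' = 3%N & R' = ((R.1.1, R.1.2), R.2 - k%:Z)].
Proof.
elim=> [q0 x0|q0 x0 q1 m w0 q2 y0 Hm _ IH|q0 x0 a q1 m w0 q2 y0 Hm _ IH] Hq.
- exists 0%N; split => //; case: x0 => [[a b] c] /=; by rewrite subr0.
- by rewrite /= /Hdelta Hq in Hm.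
- case: a Hm => [[[]|]|] /=; rewrite /Hdelta Hq // inE => /eqP [E1 E2]; subst q1 m.
  move: (IH erefl) => {IH} [k [-> -> ->]]; exists k.+1; split => //.
  case: x0 => [[a b] c] /=; rewrite /Hmul /gCi /=; congr ((_, _), _); lia.
Qed.

Lemma P2 q R w q' R' : gcH q R w q' R' -> nat_of_ord q = 2%N ->
  nat_of_ord q' = 3%N -> R' = Hone ->
  exists k j : nat, w = nseq k None /\ R = ((0, j%:Z), k%:Z).
Proof.
elim=> [q0 x0|q0 x0 q1 m w0 q2 y0 Hm Hc IH|q0 x0 a q1 m w0 q2 y0 Hm _ IH] Hq Hq' HR.
- by rewrite Hq in Hq'.
- move: Hm; rewrite /= /Hdelta Hq !inE => /orP [] /eqP [E1 E2]; subst q1 m.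
  + move: (IH erefl Hq' HR) => {IH} [k [j [-> E]]]; exists k, j.+1; split => //.
    move: E; try clear Hc; try clear IH; case: x0 => [[a b] c]; rewrite /Hmul /gBi /= => -[E1 E2 E3].
    congr ((_, _), _); lia.
  + case: (P3 Hc erefl) => k [-> _ E]; exists k, 0%N; split => //.
    move: E; rewrite HR; clear Hc; try clear IH; case: x0 => [[a b] c]; rewrite /Hmul /= => -[E1 E2 E3].
    congr ((_, _), _); lia.
- by case: a Hm => [[[]|]|]; rewrite /= /Hdelta Hq.
Qed.

Lemma P1 q R w q' R' : gcH q R w q' R' -> nat_of_ord q = 1%N ->
  nat_of_ord q' = 3%N -> R' = Hone ->
  exists k i j : nat, w = nseq k None /\ R = ((i%:Z, j%:Z), k%:Z).
Proof.
elim=> [q0 x0|q0 x0 q1 m w0 q2 y0 Hm Hc IH|q0 x0 a q1 m w0 q2 y0 Hm _ IH] Hq Hq' HR.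
- by rewrite Hq in Hq'.
- move: Hm; rewrite /= /Hdelta Hq !inE => /orP [] /eqP [E1 E2]; subst q1 m.
  + move: (IH erefl Hq' HR) => {IH} [k [i [j [-> E]]]]; exists k, i.+1, j; split => //.
    move: E; try clear Hc; try clear IH; case: x0 => [[a b] c]; rewrite /Hmul /gAi /= => -[E1 E2 E3].
    congr ((_, _), _); lia.
  + case: (P2 Hc erefl Hq' HR) => k [j [-> E]]; exists k, 0%N, j; split => //.
    move: E; try clear Hc; try clear IH; case: x0 => [[a b] c]; rewrite /Hmul /= => -[E1 E2 E3].
    congr ((_, _), _); lia.
- by case: a Hm => [[[]|]|]; rewrite /= /Hdelta Hq.
Qed.

Lemma P0 q R w q' R' : gcH q R w q' R' -> nat_of_ord q = 0%N ->
  nat_of_ord q' = 3%N -> R' = Hone ->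
  exists u (k i j : nat), [/\ all (fun l => l != None) u, w = u ++ nseq k None
     & Hmul R (hv u) = ((i%:Z, j%:Z), k%:Z)].
Proof.
elim=> [q0 x0|q0 x0 q1 m w0 q2 y0 Hm Hc IH|q0 x0 a q1 m w0 q2 y0 Hm _ IH] Hq Hq' HR.
- by rewrite Hq in Hq'.
- move: Hm; rewrite /= /Hdelta Hq !inE => /eqP [E1 E2]; subst q1 m.
  case: (P1 Hc erefl Hq' HR) => k [i [j [-> E]]]; exists [::], k, i, j; split => //.
- case: a Hm => [[[]|]|]; rewrite /= /Hdelta Hq // inE => /eqP [E1 E2]; subst q1 m.
  + move: (IH erefl Hq' HR) => {IH} [u [k [i [j [Hu -> E]]]]].
    exists (Some true :: u), k, i, j; split => //.
    move: E; try clear Hc; try clear IH; case: x0 => [[a b] c]; rewrite /Hmul /hv /gA /= => -[E1 E2 E3].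
    congr ((_, _), _); nia.
  + move: (IH erefl Hq' HR) => {IH} [u [k [i [j [Hu -> E]]]]].
    exists (Some false :: u), k, i, j; split => //.
    move: E; try clear Hc; try clear IH; case: x0 => [[a b] c]; rewrite /Hmul /hv /gB /= => -[E1 E2 E3].
    congr ((_, _), _); nia.
Qed.

Lemma HmulA x y z : Hmul (Hmul x y) z = Hmul x (Hmul y z).
Proof.
case: x => [[a b] c]; case: y => [[d e] f]; case: z => [[g h] i]; rewrite /Hmul /=.
congr ((_, _), _); ring.
Qed.

Lemma Hmul1 x : Hmul x Hone = x.
Proof. case: x => [[a b] c]; rewrite /Hmul /=; congr ((_, _), _); lia. Qed.

Lemma C0 u R : all (fun l => l != None) u -> gcH s0 R u s0 (Hmul R (hv u)).
Proof.
elim: u R => [|l u IH] R /=.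
- have -> : Hmul R (hv [::]) = R by exact: Hmul1.
  move=> _; exact: gcomp_nil.
- case: l => [[]|] //= Hu.
  + apply: (@gcomp_sym _ _ _ HAut s0 R (Some true) s0 gA); first by rewrite inE.
    have -> : Hmul R (hv (Some true :: u)) = Hmul (Hmul R gA) (hv u).
      rewrite HmulA; congr Hmul; rewrite /Hmul /hv /gA /=; congr ((_, _), _); lia.
    exact: IH.
  + apply: (@gcomp_sym _ _ _ HAut s0 R (Some false) s0 gB); first by rewrite inE.
    have -> : Hmul R (hv (Some false :: u)) = Hmul (Hmul R gB) (hv u).
      rewrite HmulA; congr Hmul; rewrite /Hmul /hv /gB /=; congr ((_, _), _); lia.
    exact: IH.
Qed.

Lemma C1 (i : nat) (j z : int) : gcH s1 ((i%:Z, j), z) [::] s1 ((0, j), z).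
Proof.
elim: i => [|i IH]; first exact: gcomp_nil.
apply: (@gcomp_eps _ _ _ HAut s1 _ s1 gAi); first by rewrite !inE eqxx.
rewrite (_ : Hmul _ _ = ((i%:Z, j), z)) //.
rewrite /Hmul /gAi /=; congr ((_, _), _); lia.
Qed.

Lemma C2 (j : nat) (z : int) : gcH s2 ((0, j%:Z), z) [::] s2 ((0, 0), z).
Proof.
elim: j => [|j IH]; first exact: gcomp_nil.
apply: (@gcomp_eps _ _ _ HAut s2 _ s2 gBi); first by rewrite !inE eqxx.
rewrite (_ : Hmul _ _ = ((0, j%:Z), z)) //.
rewrite /Hmul /gBi /=; congr ((_, _), _); lia.
Qed.

Lemma C3 (k : nat) (z : int) : gcH s3 ((0, 0), z) (nseq k None) s3 ((0, 0), z - k%:Z).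
Proof.
elim: k z => [|k IH] z /=; first by rewrite subr0; exact: gcomp_nil.
apply: (@gcomp_sym _ _ _ HAut s3 _ None s3 gCi); first by rewrite !inE eqxx.
rewrite (_ : ((0, 0), z - k.+1%:Z) = ((0, 0), (z - 1) - k%:Z) :> Heis).
  rewrite (_ : Hmul _ _ = ((0, 0), z - 1)); first exact: IH.
  rewrite /Hmul /gCi /=; congr ((_, _), _); lia.
congr ((_, _), _); lia.
Qed.

Lemma Lsep_H : in_LG Hmul Hone Lsep.
Proof.
exists HAut => w; split.
- case=> u Hu ->; exists s3; first by rewrite /= inE.
  apply: gcomp_cat; first by apply: C0 Hu.
  rewrite (_ : Hmul Hone (hv u) = hv u); last by rewrite /Hmul /hv /=; congr ((_,_),_); lia.
  apply: (@gcomp_eps _ _ _ HAut s0 _ s1 Hone); first by rewrite !inE eqxx.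
  rewrite Hmul1 -[nseq _ _]cat0s; apply: gcomp_cat; first exact: C1.
  apply: (@gcomp_eps _ _ _ HAut s1 _ s2 Hone); first by rewrite !inE eqxx orbT.
  rewrite Hmul1 -[nseq _ _]cat0s; apply: gcomp_cat; first exact: C2.
  apply: (@gcomp_eps _ _ _ HAut s2 _ s3 Hone); first by rewrite !inE eqxx orbT.
  rewrite Hmul1 (_ : Hone = ((0, 0), (inv u)%:Z - (inv u)%:Z)); first exact: C3.
  by rewrite subrr.
- case=> q; rewrite /= inE => /eqP -> Hc.
  case: (P0 Hc erefl erefl erefl) => u [k [i [j [Hu -> E]]]].
  exists u => //; congr (_ ++ nseq _ _).
  move: E; rewrite /Hmul /hv /= => -[_ _ E]; lia.
Qed.

Lemma count_na_cat p q : na (p ++ q) = (na p + na q)%N.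
Proof. by rewrite /na count_cat. Qed.
Lemma count_nb_cat p q : nb (p ++ q) = (nb p + nb q)%N.
Proof. by rewrite /nb count_cat. Qed.

Lemma inv_cat p q : inv (p ++ q) = (inv p + inv q + na p * nb q)%N.
Proof.
elim: p => [|l p IH] /=; first by rewrite /na /= mul0n addn0.
rewrite IH count_nb_cat; case: l => [[]|] /=; rewrite /na /=; lia.
Qed.

Definition blk (t : nat) : seq letter := Some true :: nseq t (Some false).

Lemma na_blks s : na (flatten (map blk s)) = size s.
Proof.
elim: s => [|t s IH] //=; rewrite count_na_cat IH /na /= count_nseq /=; lia.
Qed.

Lemma nb_blks s : nb (flatten (map blk s)) = sumn s.
Proof.
elim: s => [|t s IH] //=; rewrite count_nb_cat IH /nb /= count_nseq /=; lia.
Qed.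

Lemma blks_noc s : all (fun l => l != None) (flatten (map blk s)).
Proof.
elim: s => [|t s IH] //=; rewrite all_cat IH andbT /=.
by elim: t => [|t IHt] //=.
Qed.

Lemma sumn_ub (s : seq nat) M : (forall t, t \in s -> t < M)%N ->
  (sumn s + size s <= size s * M)%N.
Proof.
elim: s => [|t s IH] //= H.
have h1 := H t (mem_head _ _).
have h2 : (sumn s + size s <= size s * M)%N.
  by apply: IH => t' Ht'; apply: H; rewrite inE Ht' orbT.
lia.
Qed.

Lemma sumn_lb (s : seq nat) M : (forall t, t \in s -> M <= t)%N ->
  (size s * M <= sumn s)%N.
Proof.
elim: s => [|t s IH] //= H.
have h1 := H t (mem_head _ _).
have h2 : (size s * M <= sumn s)%N.
  by apply: IH => t' Ht'; apply: H; rewrite inE Ht' orbT.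
lia.
Qed.

Lemma split_uniq (u1 u2 : seq letter) m1 m2 :
  all (fun l => l != None) u1 -> all (fun l => l != None) u2 ->
  u1 ++ nseq m1 None = u2 ++ nseq m2 None -> u1 = u2 /\ m1 = m2.
Proof.
elim: u1 u2 => [|l1 u1 IH] [|l2 u2] //=.
- by move=> _ _ /(congr1 size); rewrite !size_nseq.
- case: m1 => [|m1] //= _ /andP [h _] [E]; by rewrite -E in h.
- clear IH; case: m2 => [|m2] //= /andP [h _] _ [E]; by rewrite E in h.
- move=> /andP [_ h1] /andP [_ h2] [-> E].
  by case: (IH _ h1 h2 E) => -> ->.
Qed.

Definition Z2sub (a b : Z2) : Z2 := (a.1 - b.1, a.2 - b.2).

Lemma Z2subK (a b : Z2) : Z2mul (Z2sub a b) b = a.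
Proof. by case: a => a1 a2; rewrite /Z2mul /Z2sub /= !subrK. Qed.

Lemma Z2mulA (a b c : Z2) : Z2mul (Z2mul a b) c = Z2mul a (Z2mul b c).
Proof. by rewrite /Z2mul /= !addrA. Qed.

Lemma Z2swap (a b c : Z2) :
  Z2mul (Z2sub (Z2mul (Z2sub a b) c) a) b = c.
Proof.
case: a => a1 a2; case: b => b1 b2; case: c => c1 c2.
rewrite /Z2mul /Z2sub /=; congr (_, _); ring.
Qed.

Lemma Lsep_notZ2 : ~ in_LG Z2mul Z2one Lsep.
Proof.
case=> A HA.
pose n := #|gstate A|.
pose r := (2 * n)%N.
pose u := flatten (map blk (iota 0 r)).
have Hw : Lsep (u ++ nseq (inv u) None) by exists u => //; exact: blks_noc.
case/HA: Hw => qf Hqf Hc.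
case: (gcomp_trace (A := A) Hc) => f [f0 fs fe].
have fc := gcomp_compose fs.
case: (@pig3 (gstate A) (fun t => (f t).1) r.+1) ; first by rewrite ltnSn.
move=> i [j [k [ij jk kr [E1 E2]]]].
pose x := flatten (map blk (iota 0 i)).
pose y := flatten (map blk (iota i (j - i))).
pose z := flatten (map blk (iota j (k - j))).
pose s := flatten (map blk (iota k (r - k))).
have Hu : u = x ++ y ++ z ++ s.
  rewrite /u /x /y /z /s (_ : r = (i + (j - i) + (k - j) + (r - k))%N); last by lia.
  rewrite !iotaD !map_cat !flatten_cat !add0n (subnKC (ltnW ij)) (subnKC (ltnW jk)).
  by rewrite -!catA addKn.
have HX : gcomp Z2mul (f 0%N).1 (f 0%N).2 x (f i).1 (f i).2.
  have := fc i 0%N (leq0n _); rewrite add0n => H; apply: H; lia.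
have HY : gcomp Z2mul (f i).1 (f i).2 y (f j).1 (f j).2.
  have := fc (j - i)%N i (leq0n _); rewrite (subnKC (ltnW ij)) => H; apply: H; lia.
have HZ : gcomp Z2mul (f j).1 (f j).2 z (f k).1 (f k).2.
  have := fc (k - j)%N j (leq0n _); rewrite (subnKC (ltnW jk)) => H; apply: H; lia.
have HS : gcomp Z2mul (f k).1 (f k).2 s (f r).1 (f r).2.
  have := fc (r - k)%N k (leq0n _); rewrite (subnKC (kr : k <= r)%N) => H; apply: H; lia.
rewrite add0n in fe.
have HS' := gcomp_cat HS fe.
rewrite f0 /= in HX.
have HZ' := gcomp_transl Z2mulA HZ (Z2sub (f i).2 (f j).2).
rewrite Z2subK -E2 -E1 in HZ'.
have HY' := gcomp_transl Z2mulA HY (Z2sub (Z2mul (Z2sub (f i).2 (f j).2) (f k).2) (f i).2).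
rewrite Z2subK Z2swap -E1 in HY'.
rewrite -E2 -E1 in HS'.
have Hall := gcomp_cat HX (gcomp_cat HZ' (gcomp_cat HY' HS')).
pose u' := (x ++ z ++ y ++ s).
have Hacc : Lsep (u' ++ nseq (inv u) None).
  apply/HA; exists qf => //; by rewrite /u' -!catA.
case: Hacc => u'' Hu'' Ew.
have Hnc : all (fun l => l != None) u' by rewrite /u' !all_cat !blks_noc.
case: (split_uniq Hnc Hu'' Ew) => Eu Einv.
have Hne : inv (x ++ y ++ z ++ s) <> inv (x ++ z ++ y ++ s).
  rewrite !inv_cat ?count_na_cat ?count_nb_cat.
  have hay : na y = (j - i)%N by rewrite /y na_blks size_iota.
  have haz : na z = (k - j)%N by rewrite /z na_blks size_iota.
  have hy : (nb y + na y <= na y * j)%N.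
    rewrite /y na_blks nb_blks; apply: sumn_ub => t; rewrite mem_iota; lia.
  have hz : (na z * j <= nb z)%N.
    rewrite /z na_blks nb_blks; apply: sumn_lb => t; rewrite mem_iota; lia.
  have key : (na z * nb y < na y * nb z)%N.
    have hay0 : (0 < na y)%N by rewrite hay; lia.
    have haz0 : (0 < na z)%N by rewrite haz; lia.
    nia.
  lia.
apply: Hne; by rewrite -Hu Einv -Eu.
Qed.

Theorem theorem3p10 :
  (forall (S : finType) (L : seq S -> Prop),
      in_LG Z2mul Z2one L -> in_LG Hmul Hone L) /\
  (exists (S : finType) (L : seq S -> Prop),
      in_LG Hmul Hone L /\ ~ in_LG Z2mul Z2one L).
Proof.
split; first exact: part1.
exists (option bool : finType), Lsep; split; [exact: Lsep_H | exact: Lsep_notZ2].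
Qed.
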